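(* Let $A$ be a finite set of options and consider $V\ge1$ votes, each a truncated ranking with possible ties, interpreted as in the context, with Llull matrix $v$. Let $T$ be the set of path-top choices of $v$. If $x,y\in A$, $x$ dominates $y$ in the sense of Pareto, and $y\in T$, then $x\in T$.
   Context: A truncated ranking with ties is a weak order on a subset of $A$ (the ranked options); for ranked options, $x$ is preferred to $y$ if strictly above, and ranked equally if tied; every ranked option is preferred to every unranked option; two unranked options are not compared. Llull matrix: $v_{xy}=(\#\{\text{votes preferring }x\text{ to }y\}+\tfrac12\#\{\text{votes ranking }x,y\text{ equally}\})/V$. Path scores: $v^*_{xy}=\max\min(v_{x_0x_1},\dots,v_{x_{m-1}x_m})$ over all paths $x_0\dots x_m$ ($m\ge1$, $x_0=x$, $x_m=y$, $x_i$ pairwise distinct). Ranking relation: $x\succeq y$ iff there is a path $x_0\dots x_m$ from $x$ to $y$ with $v^*_{x_ix_{i+1}}\ge v^*_{x_{i+1}x_i}$ for all $i<m$. $x$ is a path-top choice if $x\succeq z$ for all $z\ne x$. $x$ dominates $y$ in the sense of Pareto if every vote either prefers $x$ to $y$ or ranks them equally, and at least one vote prefers $x$ to $y$. *)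

(* Defs.v *)
From HB Require Import structures.
From mathcomp Require Import all_boot all_order all_algebra.
Set Implicit Arguments. Unset Strict Implicit. Unset Printing Implicit Defensive.
Import Order.TTheory GRing.Theory Num.Theory.
Local Open Scope ring_scope.

(* A truncated ranking with ties on the finite option set A: each option is
   either unranked (None) or ranked at level (Some k); smaller level = better.
   Every weak order on a subset of A is representable this way. *)
Definition ballot (A : finType) := A -> option nat.

Section Defs.
Variable A : finType.

Definition prefers (b : ballot A) (x y : A) : bool :=
  match b x, b y with
  | Some i, Some j => (i < j)%N
  | Some _, None => true
  | _, _ => false
  end.

Definition ranks_equal (b : ballot A) (x y : A) : bool :=
  match b x, b y with
  | Some i, Some j => i == j
  | _, _ => false
  end.

Definition llull (votes : seq (ballot A)) (x y : A) : rat :=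
  ((count (fun b => prefers b x y) votes)%:R
    + 2^-1 * (count (fun b => ranks_equal b x y) votes)%:R)
  / (size votes)%:R.

Definition path_min (v : A -> A -> rat) (s : seq A) : rat :=
  \big[Num.min/1]_(e <- zip s (behead s)) v e.1 e.2.

(* path score v*_{xy}: max over paths x = x_0, ..., x_m = y, m >= 1, with
   pairwise distinct vertices (the intermediate vertices form an n-tuple,
   n <= #|A|), of the minimum of v along the path. *)
Definition path_score (v : A -> A -> rat) (x y : A) : rat :=
  \big[Num.max/0]_(n < #|A|.+1)
    \big[Num.max/0]_(t : n.-tuple A | uniq (x :: rcons t y))
      path_min v (x :: rcons t y).

Definition ranks_above (v : A -> A -> rat) (x y : A) : Prop :=
  exists s : seq A, [/\ s != [::],
    path (fun a b => path_score v b a <= path_score v a b) x s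
    & last x s = y].

Definition path_top (v : A -> A -> rat) (x : A) : Prop :=
  forall z, z != x -> ranks_above v x z.

Definition pareto_dominates (votes : seq (ballot A)) (x y : A) : Prop :=
  all (fun b => prefers b x y || ranks_equal b x y) votes /\
  has (fun b => prefers b x y) votes.

End Defs.

(* Main.v *)
Require Import Defs.
From mathcomp Require Import all_boot all_order all_algebra.
From mathcomp Require Import zify lra.
Import Order.TTheory GRing.Theory Num.Theory.

Section Aux.
Variable A : finType.
Local Open Scope ring_scope.

Lemma minle (a b c d : rat) : a <= c -> b <= d -> Num.min a b <= Num.min c d.
Proof. by move=> h1 h2; rewrite le_min !ge_min h1 h2 orbT. Qed.

Lemma maxle (a b c d : rat) : a <= c -> b <= d -> Num.max a b <= Num.max c d.
Proof. by move=> h1 h2; rewrite ge_max !le_max h1 h2 orbT. Qed.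

Lemma cnt_mono (P1 Q1 P2 Q2 : pred (ballot A)) s :
  all (fun b => 2 * P1 b + Q1 b <= 2 * P2 b + Q2 b)%N s ->
  (count P1 s)%:R + 2^-1 * (count Q1 s)%:R
    <= (count P2 s)%:R + 2^-1 * (count Q2 s)%:R :> rat.
Proof.
elim: s => [|b s IH] //= /andP[hb hs].
have := IH hs; move: hb; rewrite -(ler_nat rat).
rewrite !natrD => hb hr.
lra.
Qed.

Lemma llull_mono (votes : seq (ballot A)) a b c d :
  all (fun v => 2 * prefers v a b + ranks_equal v a b
                 <= 2 * prefers v c d + ranks_equal v c d)%N votes ->
  llull votes a b <= llull votes c d.
Proof.
move=> h; rewrite /llull; apply: ler_wpM2r; first by rewrite invr_ge0 ler0n.
exact: cnt_mono.
Qed.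

Lemma pm_last (v : A -> A -> rat) x y
  (h : forall c, c != x -> c != y -> v c x <= v c y) a t :
  all (fun c => (c != x) && (c != y)) (a :: t) ->
  path_min v (a :: rcons t x) <= path_min v (a :: rcons t y).
Proof.
elim: t a => [|b t IH] a.
  by rewrite /path_min /= !big_cons !big_nil andbT => /andP[h1 h2]; apply: minle => //; apply: h.
move=> /= /andP[_ hb]; have := IH b hb.
by rewrite /path_min /= !big_cons => hI; apply: minle.
Qed.

End Aux.

Local Open Scope ring_scope.
Theorem corollary4p2 (A : finType) (votes : seq (ballot A)) (x y : A) :
  (0 < size votes)%N ->
  pareto_dominates votes x y ->
  path_top (llull votes) y ->
  path_top (llull votes) x.
Proof.
move=> _ [hall _] htop.
set v := llull votes.
have vote_gen : forall (P : ballot A -> bool),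
   (forall b, prefers b x y || ranks_equal b x y -> P b) -> all P votes.
  by move=> P hP; elim: (votes) hall => //= b s IH /andP[h1 h2]; rewrite hP // IH.
have E1 : forall c, c != x -> c != y -> v c x <= v c y.
  move=> c _ _; apply: llull_mono; apply: vote_gen => b.
  rewrite /prefers /ranks_equal.
  case: (b x) => [i|]; case: (b y) => [j|]; case: (b c) => [k|] //=; lia.
have E2 : forall c, v y c <= v x c.
  move=> c; apply: llull_mono; apply: vote_gen => b.
  rewrite /prefers /ranks_equal.
  case: (b x) => [i|]; case: (b y) => [j|]; case: (b c) => [k|] //=; lia.
have E3 : v y x <= v x y.
  apply: llull_mono; apply: vote_gen => b.
  rewrite /prefers /ranks_equal.
  case: (b x) => [i|]; case: (b y) => [j|] //=; lia.
have PS : path_score v y x <= path_score v x y.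
  rewrite /path_score; apply: (big_ind2 (fun a b => a <= b)) => //.
    by move=> *; apply: maxle.
  move=> n _.
  rewrite (eq_bigl (fun t : n.-tuple A => uniq (x :: rcons t y))); last first.
    by move=> t; rewrite /= !rcons_uniq !mem_rcons !inE eq_sym; case: (x == y); case: (x \in _); case: (y \in _).
  apply: (big_ind2 (fun a b => a <= b)) => //.
    by move=> *; apply: maxle.
  move=> t hu.
  case: (tval t) hu => [|z s] hu.
    by rewrite /path_min /= !big_cons !big_nil; apply: minle.
  rewrite /path_min /= !big_cons; apply: minle; first exact: E2.
  move: hu; rewrite cons_uniq -!rcons_cons rcons_uniq mem_rcons inE negb_or.
  move=> /andP[/andP[_ hx] /andP[hy _]].
  have ha : all (fun c => (c != x) && (c != y)) (z :: s).
    by apply/allP => c hc; rewrite (memPn hx c hc) (memPn hy c hc).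
  by have := @pm_last A v x y E1 z s ha; rewrite /path_min /=.
have Rxy : ranks_above v x y.
  by exists [:: y]; split => //=; rewrite PS.
move=> z hz; case: (eqVneq z y) => [->|hzy]; first exact: Rxy.
have [s1 [hs1 hp1 hl1]] := Rxy.
have [s2 [hs2 hp2 hl2]] := htop z hzy.
exists (s1 ++ s2); split.
- by case: s1 hs1 {hp1 hl1}.
- by rewrite cat_path hp1 hl1 hp2.
- by rewrite last_cat hl1 hl2.
Qed.
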